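(* For every $z\in\{1,\dots,m-1\}$: (i) for all integers $x\in[x_z,z]$, $d_F(\tau_{x,z},P[t_x,t_z])\le4\Delta$, and for all integers $y\in[z+1,y_z]$, $d_F(\tau_{z+1,y},P[t_{z+1},t_y])\le4\Delta$; (ii) for all integers $x\in[1,x_z)$, $d_F(\tau_{x,z},P[t_x,t_z])>2\Delta$, and for all integers $y\in(y_z,m]$, $d_F(\tau_{z+1,y},P[t_{z+1},t_y])>2\Delta$.
   Context: Let $d\ge1$ and let $P:[0,1]\to\mathbb R^d$ be a polygonal curve with breakpoint parameters $0=t_1<t_2<\dots<t_m=1$, and fix $\Delta>0$. For $0\le a\le b\le1$, $P[a,b]$ is the subcurve from $P(a)$ to $P(b)$. The Fréchet distance $d_F(P,Q)=\inf_\gamma\sup_{t\in[0,1]}\|P(\gamma(t))-Q(t)\|$, $\gamma$ over increasing homeomorphisms of $[0,1]$. For $1\le a\le b\le m$, $\tau_{a,b}$ is the segment from $P(t_a)$ to $P(t_b)$. For $z\in\{1,\dots,m-1\}$, $x_z$ is the smallest integer $x'\in\{1,\dots,z\}$ such that $d_F(\tau_{x,z},P[t_x,t_z])\le4\Delta$ for every integer $x\in[x',z]$, and $y_z$ is the largest integer $y'\in\{z+1,\dots,m\}$ such that $d_F(\tau_{z+1,y},P[t_{z+1},t_y])\le4\Delta$ for every integer $y\in[z+1,y']$. *)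

(* Defs.v *)
From HB Require Import structures.
From mathcomp Require Import all_boot all_order all_algebra.
From mathcomp Require Import all_classical all_reals all_analysis.
Set Implicit Arguments. Unset Strict Implicit. Unset Printing Implicit Defensive.
Import Order.TTheory GRing.Theory Num.Theory.
Import numFieldNormedType.Exports.
Local Open Scope classical_set_scope.
Local Open Scope ring_scope.

Definition enorm {R : realType} {d : nat} (v : 'rV[R]_d) : R :=
  Num.sqrt (\sum_(i < d) (v ord0 i) ^+ 2).

(* increasing homeomorphisms of [0,1]: continuous, strictly increasing,
   fixing 0 and 1 (values outside [0,1] are irrelevant) *)
Definition incr_homeo01 {R : realType} (g : R -> R) : Prop :=
  {within [set x : R | 0 <= x <= 1], continuous g} /\
  (forall s u, 0 <= s -> s < u -> u <= 1 -> g s < g u) /\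
  g 0 = 0 /\ g 1 = 1.

Definition frechet {R : realType} {d : nat} (A B : R -> 'rV[R]_d) : \bar R :=
  ereal_inf [set ereal_sup [set (enorm (A (g t) - B t))%:E | t in [set x : R | 0 <= x <= 1]]
            | g in [set g | incr_homeo01 g]].

(* breakpoints t_1 < ... < t_m with t_1 = 0 and t_m = 1 (indices 1..m) *)
Definition breakpoints {R : realType} (m : nat) (t : nat -> R) : Prop :=
  t 1%N = 0 /\ t m = 1 /\
  (forall i j, (1 <= i)%N -> (i < j)%N -> (j <= m)%N -> t i < t j).

Definition polygonal {R : realType} {d : nat} (m : nat) (t : nat -> R)
    (P : R -> 'rV[R]_d) : Prop :=
  forall i, (1 <= i)%N -> (i < m)%N ->
    forall s, t i <= s -> s <= t i.+1 ->
      P s = ((t i.+1 - s) / (t i.+1 - t i)) *: P (t i)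
            + ((s - t i) / (t i.+1 - t i)) *: P (t i.+1).

Definition subcurve {R : realType} {d : nat} (P : R -> 'rV[R]_d) (a b : R)
  : R -> 'rV[R]_d := fun s => P (a + s * (b - a)).

Definition tau {R : realType} {d : nat} (P : R -> 'rV[R]_d) (t : nat -> R)
  (a b : nat) : R -> 'rV[R]_d := fun s => (1 - s) *: P (t a) + s *: P (t b).

Definition dseg {R : realType} {d : nat} (P : R -> 'rV[R]_d) (t : nat -> R)
  (a b : nat) : \bar R := frechet (tau P t a b) (subcurve P (t a) (t b)).

Definition is_xz {R : realType} {d : nat} (P : R -> 'rV[R]_d) (t : nat -> R)
  (Delta : R) (z xz : nat) : Prop :=
  let good x' := (1 <= x')%N /\ (x' <= z)%N /\
      (forall x, (x' <= x)%N -> (x <= z)%N -> (dseg P t x z <= (4 * Delta)%:E)%E) in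
  good xz /\ (forall x', good x' -> (xz <= x')%N).

Definition is_yz {R : realType} {d : nat} (P : R -> 'rV[R]_d) (t : nat -> R)
  (Delta : R) (m z yz : nat) : Prop :=
  let good y' := (z.+1 <= y')%N /\ (y' <= m)%N /\
      (forall y, (z.+1 <= y)%N -> (y <= y')%N -> (dseg P t z.+1 y <= (4 * Delta)%:E)%E) in
  good yz /\ (forall y', good y' -> (y' <= yz)%N).

(* Main.v *)
Require Import Defs.
From HB Require Import structures.
From mathcomp Require Import all_boot all_order all_algebra.
From mathcomp Require Import all_classical all_reals all_analysis.
From mathcomp Require Import ring lra zify.
Import Order.TTheory GRing.Theory Num.Theory.
Import numFieldNormedType.Exports.
Local Open Scope classical_set_scope.
Local Open Scope ring_scope.

Section Aux.
Variable R : realType.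
Variable d : nat.
Implicit Types u v : 'rV[R]_d.

Lemma enorm_ge0 v : 0 <= enorm v.
Proof. exact: sqrtr_ge0. Qed.

Lemma sumsq_ge0 v : 0 <= \sum_(i < d) (v ord0 i) ^+ 2.
Proof. by apply: sumr_ge0 => i _; exact: sqr_ge0. Qed.

Lemma sumsqE v : \sum_(i < d) (v ord0 i) ^+ 2 = enorm v ^+ 2.
Proof. by rewrite sqr_sqrtr // sumsq_ge0. Qed.

Lemma enorm0_entries v : enorm v = 0 -> forall i, v ord0 i = 0.
Proof.
move=> h i; have h2 : \sum_(i < d) (v ord0 i) ^+ 2 = 0 by rewrite sumsqE h expr0n.
have := @psumr_eq0P R _ predT (fun i => (v ord0 i) ^+ 2) (fun i _ => sqr_ge0 (v ord0 i)) h2 i isT.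
by move/eqP; rewrite sqrf_eq0 => /eqP.
Qed.

Lemma CS u v : \sum_(i < d) u ord0 i * v ord0 i <= enorm u * enorm v.
Proof.
have [a0|an0] := eqVneq (enorm u) 0.
  rewrite a0 mul0r big1 // => i _; by rewrite (@enorm0_entries u a0) mul0r.
have [b0|bn0] := eqVneq (enorm v) 0.
  rewrite b0 mulr0 big1 // => i _; by rewrite (@enorm0_entries v b0) mulr0.
have ap : 0 < enorm u by rewrite lt_def an0 enorm_ge0.
have bp : 0 < enorm v by rewrite lt_def bn0 enorm_ge0.
set a := enorm u in ap an0 *; set b := enorm v in bp bn0 *.
have key : \sum_(i < d) (2 * (u ord0 i * v ord0 i) * (a * b))
   <= \sum_(i < d) (b ^+ 2 * (u ord0 i) ^+ 2 + a ^+ 2 * (v ord0 i) ^+ 2).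
  apply: ler_sum => i _.
  have := sqr_ge0 (b * u ord0 i - a * v ord0 i).
  set x := u ord0 i; set y := v ord0 i; move=> h.
  rewrite -subr_ge0; apply: le_trans h _; rewrite le_eqVlt; apply/orP; left; apply/eqP; ring.
rewrite -mulr_suml -mulr_sumr big_split /= -!mulr_sumr !sumsqE in key.
have abp : 0 < a * b by rewrite mulr_gt0.
set S := \sum_(i < d) _ in key *.
rewrite -(ler_pM2r abp).
have e : b ^+ 2 * a ^+ 2 + a ^+ 2 * b ^+ 2 = 2 * (a * b * (a * b)) by ring.
rewrite e -mulrA in key.
by rewrite -(ler_pM2l (ltr0Sn _ 1)).
Qed.

Lemma enormD u v : enorm (u + v) <= enorm u + enorm v.
Proof.
rewrite -[enorm u + enorm v]ger0_norm ?addr_ge0 ?enorm_ge0 // -sqrtr_sqr.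
rewrite {1}/enorm; apply: ler_wsqrtr.
rewrite (eq_bigr (fun i => (u ord0 i) ^+ 2 + 2 * (u ord0 i * v ord0 i) + (v ord0 i) ^+ 2)); last first.
  by move=> i _; rewrite mxE; ring.
rewrite !big_split /= -mulr_sumr !sumsqE.
have := CS u v; set S := \sum_(i < d) _.
move=> h; have : 2 * S <= 2 * (enorm u * enorm v) by rewrite ler_pM2l.
move=> h2; suff : enorm u ^+ 2 + 2 * (enorm u * enorm v) + enorm v ^+ 2 = (enorm u + enorm v) ^+ 2.
  move=> <-; rewrite lerD2r lerD2l //.
ring.
Qed.

Lemma enormZ c v : enorm (c *: v) = `|c| * enorm v.
Proof.
rewrite /enorm (eq_bigr (fun i => c ^+ 2 * (v ord0 i) ^+ 2)); last first.
  by move=> i _; rewrite mxE exprMn.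
by rewrite -mulr_sumr sqrtrM ?sqr_ge0 // sqrtr_sqr.
Qed.

Lemma enorm0 : enorm (0 : 'rV[R]_d) = 0.
Proof.
rewrite /enorm big1 ?sqrtr0 // => i _; by rewrite mxE expr0n.
Qed.

End Aux.
Section Frech.
Variable R : realType.
Variable d : nat.

Lemma aff_cont (a c : R) : continuous (fun u : R => a + u * c).
Proof.
move=> x; apply: cvgD; first exact: cvg_cst.
apply: cvgM; [exact: cvg_id | exact: cvg_cst].
Qed.

Lemma within_aff (g : R -> R) (a c : R) (A : set R) :
  {within A, continuous g} -> (forall u, A u -> A (a + u * c)) ->
  {within A, continuous (fun u => g (a + u * c))}.
Proof.
move=> /subspace_continuousP cg hA; apply/subspace_continuousP => x Ax.
have gcv := cg (a + x * c) (hA x Ax).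
have hcv : (fun u => a + u * c) @ within A (nbhs x) --> within A (nbhs (a + x * c)).
  move=> W Wn.
  have H2 : nbhs (a + x*c) (fun t => A t -> W t) by exact: Wn.
  have H3 : nbhs x (fun u => A (a + u * c) -> W (a + u * c)) by exact: aff_cont a c x _ H2.
  change (nbhs x (fun u => A u -> W (a + u * c))).
  exact: (filterS (fun u H Au => H (hA u Au)) H3).
have := cvg_comp _ _ hcv gcv. rewrite /from_subspace /=. exact.
Qed.

Lemma homeo_mono (g : R -> R) s u : incr_homeo01 g -> 0 <= s -> s <= u -> u <= 1 -> g s <= g u.
Proof.
move=> [_ [hm _]] s0 su u1; rewrite le_eqVlt in su.
case/orP: su => [/eqP -> // | su]; exact/ltW/hm.
Qed.

Lemma frechet_sub (A B A' B' : R -> 'rV[R]_d) (a b q0 q1 : 'rV[R]_d) (g : R -> R) (u0 u1 δ : R) :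
  (forall s, A s = (1 - s) *: a + s *: b) ->
  (forall s, A' s = (1 - s) *: q0 + s *: q1) ->
  0 <= u0 -> u0 < u1 -> u1 <= 1 ->
  (forall u, B' u = B (u0 + u * (u1 - u0))) ->
  q0 = B u0 -> q1 = B u1 ->
  incr_homeo01 g -> (forall u, 0 <= u <= 1 -> enorm (A (g u) - B u) <= δ) ->
  (frechet A' B' <= (2 * δ)%:E)%E.
Proof.
move=> HA HA' u00 u01 u11 HB' Hq0 Hq1 hg Hb.
have hg' := hg; case: hg' => [gc [gm [g0 g1]]].
set sA := g u0; set sB := g u1.
have sAB : sA < sB by apply: gm => //; lra.
have Dp : 0 < sB - sA by rewrite subr_gt0.
have Dn : sB - sA != 0 by rewrite gt_eqF.
pose h := fun u => u0 + u * (u1 - u0).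
have hA : forall u, 0 <= u <= 1 -> 0 <= h u <= 1.
  move=> u /andP[ua ub]; rewrite /h; apply/andP; split; nra.
have hA' : forall u, 0 <= u <= 1 -> u0 <= h u <= u1.
  move=> u /andP[ua ub]; rewrite /h; apply/andP; split; nra.
pose g' := fun u => (g (h u) - sA) / (sB - sA).
have hg' : incr_homeo01 g'.
  split; last split; last split.
  - have c1 : {within [set x : R | 0 <= x <= 1], continuous (fun u => g (u0 + u * (u1 - u0)))}.
      apply: within_aff => // u; exact: hA.
    have := @within_continuous_comp _ _ _ [set x : R | 0 <= x <= 1] _ (fun y => (y - sA) / (sB - sA)) _ c1.
    apply => y _; apply: cvgM; last exact: cvg_cst.
    apply: cvgB; [exact: cvg_id | exact: cvg_cst].
  - move=> s u s0 su u1'.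
    rewrite /g' ltr_pM2r ?invr_gt0 // ltrD2r; apply: gm.
    + by have := hA s; rewrite s0 /= => /(_ (ltW (lt_le_trans su u1'))) /andP[].
    + rewrite /h; rewrite ltrD2l ltr_pM2r //; lra.
    + by have := hA u; rewrite u1' andbT => /(_ (le_trans s0 (ltW su))) /andP[].
  - by rewrite /g' /h mul0r addr0 subrr mul0r.
  - by rewrite /g' /h (_ : u0 + 1 * (u1 - u0) = u1) ?divff //; ring.
rewrite /frechet.
apply: (@le_trans _ _ (ereal_sup [set (enorm (A' (g' t) - B' t))%:E | t in [set x : R | 0 <= x <= 1]])).
  by apply: ereal_inf_lbound; exists g'.
apply: ge_ereal_sup => _ [u hu <-]; rewrite lee_fin.
have hu' := hu; move: hu' => /andP[hu0 hu1].
have /andP[hv0 hv1] := hA u hu.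
have /andP[hvl hvu] := hA' u hu.
set w := g' u.
have gv1 : sA <= g (h u) by apply: homeo_mono hg u00 hvl hv1.
have gv2 : g (h u) <= sB by apply: homeo_mono hg hv0 hvu u11.
have w0 : 0 <= w by rewrite /w /g'; apply: divr_ge0; rewrite subr_ge0 // ltW.
have w1 : w <= 1 by rewrite /w /g' ler_pdivrMr // mul1r lerD2r.
have gvE : g (h u) = sA + w * (sB - sA) by rewrite /w /g' divfK // addrC subrK.
have E : A' w - B' u = (w - 1) *: (A sA - B u0) + (- w) *: (A sB - B u1) + (A (g (h u)) - B (h u)).
  rewrite HB' -/(h u) gvE !HA HA' Hq0 Hq1.
  by apply/rowP => i; rewrite !mxE; ring.
rewrite E.
have e1 := Hb u0 ltac:(apply/andP; split; lra).
have e2 := Hb u1 ltac:(apply/andP; split; lra).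
have e3 := Hb (h u) ltac:(apply/andP; split; lra).
apply: le_trans; first by apply: enormD.
apply: le_trans; first by apply: lerD; first apply: enormD; exact: lexx.
rewrite !enormZ ler0_norm ?subr_le0 // normrN ger0_norm //.
have f1 : (- (w - 1)) * enorm (A sA - B u0) <= (1 - w) * δ.
  rewrite opprB; apply: ler_wpM2l => //; lra.
have f2 : w * enorm (A sB - B u1) <= w * δ by apply: ler_wpM2l.
lra.
Qed.

Lemma frechet_eq (A B : R -> 'rV[R]_d) : (forall s, A s = B s) -> (frechet A B <= 0%:E)%E.
Proof.
move=> HAB.
have hid : incr_homeo01 (fun x : R => x).
  split; last by [].
  apply: continuous_subspaceT => x; exact: cvg_id.
rewrite /frechet.
apply: (@le_trans _ _ (ereal_sup [set (enorm (A ((fun x : R => x) t) - B t))%:E | t in [set x : R | 0 <= x <= 1]])).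
  by apply: ereal_inf_lbound; exists (fun x : R => x).
apply: ge_ereal_sup => _ [u hu <-]; by rewrite lee_fin HAB subrr enorm0.
Qed.

End Frech.
Section Main.
Variable R : realType.
Variable d : nat.

Lemma sub_bound (P : R -> 'rV[R]_d) (al be al' be' c : R) :
  al <= al' -> al' < be' -> be' <= be ->
  (frechet (fun s => ((1 - s) *: P al + s *: P be)%R) (subcurve P al be) <= (2 * c)%:E)%E ->
  (frechet (fun s => ((1 - s) *: P al' + s *: P be')%R) (subcurve P al' be') <= (4 * c)%:E)%E.
Proof.
move=> h1 h2 h3 H.
have Dp : 0 < be - al by rewrite subr_gt0; lra.
have Dn : be - al != 0 by rewrite gt_eqF.
apply/lee_addgt0Pr => e e0.
pose A := (fun s => ((1 - s) *: P al + s *: P be)%R).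
have : (frechet A (subcurve P al be) < (2 * c + e / 2)%:E)%E.
  apply: le_lt_trans H _; rewrite lte_fin; lra.
rewrite /frechet; case/ereal_inf_lt => _ [g hg <-] hlt.
have Hb : forall u, 0 <= u <= 1 ->
   enorm (A (g u) - subcurve P al be u) <= 2 * c + e / 2.
  move=> u hu; rewrite -lee_fin; apply: ltW; apply: le_lt_trans hlt.
  by apply: ereal_sup_ubound; exists u.
have := @frechet_sub R d (fun s => ((1 - s) *: P al + s *: P be)%R) (subcurve P al be)
  (fun s => ((1 - s) *: P al' + s *: P be')%R) (subcurve P al' be') (P al) (P be) (P al') (P be')
  g ((al' - al) / (be - al)) ((be' - al) / (be - al)) (2 * c + e / 2)
  (fun s => erefl) (fun s => erefl).
move=> /(_ _ _ _ _ _ _ hg Hb).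
have -> : (2 * (2 * c + e / 2)) = 4 * c + e :> R by lra.
rewrite EFinD; apply.
- by apply: divr_ge0; lra.
- by rewrite ltr_pM2r ?invr_gt0 //; lra.
- by rewrite ler_pdivrMr // mul1r; lra.
- move=> u; rewrite /subcurve; congr P; field; exact: Dn.
- rewrite /subcurve; congr P; field; exact: Dn.
- rewrite /subcurve; congr P; field; exact: Dn.
Qed.

Lemma deg_bound (P : R -> 'rV[R]_d) (al : R) :
  (frechet (fun s => ((1 - s) *: P al + s *: P al)%R) (subcurve P al al) <= 0%:E)%E.
Proof.
apply: frechet_eq => s; rewrite /subcurve subrr mulr0 addr0 -scalerDl subrK scale1r //.
Qed.

End Main.

Theorem mainTheorem3 (R : realType) (d : nat) (m : nat) (t : nat -> R)
    (P : R -> 'rV[R]_d) (Delta : R) :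
  (1 <= d)%N -> 0 < Delta ->
  breakpoints m t -> polygonal m t P ->
  forall z : nat, (1 <= z)%N -> (z <= m - 1)%N ->
  forall xz yz : nat, is_xz P t Delta z xz -> is_yz P t Delta m z yz ->
  ((forall x, (xz <= x)%N -> (x <= z)%N -> (dseg P t x z <= (4 * Delta)%:E)%E) /\
   (forall y, (z.+1 <= y)%N -> (y <= yz)%N -> (dseg P t z.+1 y <= (4 * Delta)%:E)%E)) /\
  ((forall x, (1 <= x)%N -> (x < xz)%N -> ((2 * Delta)%:E < dseg P t x z)%E) /\
   (forall y, (yz < y)%N -> (y <= m)%N -> ((2 * Delta)%:E < dseg P t z.+1 y)%E)).
Proof.
move=> _ Dp [t1 [tm tmono]] _ z z1 zm xz yz [[hx1 [hx2 hx3]] hxmin] [[hy1 [hy2 hy3]] hymin].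
have tle : forall i j, (1 <= i)%N -> (i <= j)%N -> (j <= m)%N -> t i <= t j.
  move=> i j hi hij hj; rewrite leq_eqVlt in hij; case/orP: hij => [/eqP -> // | hij].
  exact/ltW/tmono.
have D4 : (0%:E <= (4 * Delta)%:E)%E by rewrite lee_fin; lra.
split; first by split.
split.
- move=> x hx hxlt; rewrite ltNge; apply/negP => Hle.
  have : (xz <= x)%N.
    apply: hxmin; split => //; split; first by lia.
    move=> x' h1 h2; rewrite leq_eqVlt in h2; case/orP: h2 => [/eqP -> | h2].
      by apply: (le_trans _ D4); apply: deg_bound.
    apply: (@sub_bound R d P (t x) (t z) _ _ Delta) => //.
    + by apply: tle; lia.
    + by apply: tmono; lia.
  lia.
- move=> y hy hym; rewrite ltNge; apply/negP => Hle.
  have : (y <= yz)%N.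
    apply: hymin; split; first by lia.
    split => // y' h1 h2; rewrite leq_eqVlt in h1; case/orP: h1 => [/eqP <- | h1].
      by apply: (le_trans _ D4); apply: deg_bound.
    apply: (@sub_bound R d P (t z.+1) (t y) _ _ Delta) => //.
    + by apply: tmono; lia.
    + by apply: tle; lia.
  lia.
Qed.
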